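(* (i) For every $n\ge3$, any ortholattice in which the $n$OA law holds is orthomodular. (ii) For every $n\ge3$, there exists an orthomodular lattice in which the $n$OA law fails.
   Context: An ortholattice (OL) is a bounded lattice $(L,\cap,\cup,0,1)$ with a unary operation $'$ satisfying $a''=a$, $a\le b\Rightarrow b'\le a'$, $a\cap a'=0$ and $a\cup a'=1$. An orthomodular lattice (OML) is an OL satisfying: $a\le b$ implies $b=a\cup(a'\cap b)$. Write $a\to b=a'\cup(a\cap b)$. The operation $\overset{(n)}{\equiv}$ on variables $a_1,\dots,a_n$ is defined by $$a_1\overset{(3)}{\equiv}a_2=((a_1\to a_3)\cap(a_2\to a_3))\cup((a_1'\to a_3)\cap(a_2'\to a_3)),$$ $$a_1\overset{(n)}{\equiv}a_2=(a_1\overset{(n-1)}{\equiv}a_2)\cup((a_1\overset{(n-1)}{\equiv}a_n)\cap(a_2\overset{(n-1)}{\equiv}a_n))\quad (n\ge4).$$ In each $(n-1)$-level subexpression only the two displayed variables are substituted; $a_3$ stays the fixed third variable. The $n$OA law is the equation $(a_1\to a_3)\cap(a_1\overset{(n)}{\equiv}a_2)\le a_2\to a_3$, required for all $a_1,\dots,a_n$. *)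

(* Defs.v *)
From Stdlib Require Import Arith.

Record OL : Type := {
  car :> Type;
  meet : car -> car -> car;
  join : car -> car -> car;
  zero : car;
  one : car;
  orth : car -> car;
  meetC : forall a b, meet a b = meet b a;
  joinC : forall a b, join a b = join b a;
  meetA : forall a b c, meet a (meet b c) = meet (meet a b) c;
  joinA : forall a b c, join a (join b c) = join (join a b) c;
  meet_absorb : forall a b, meet a (join a b) = a;
  join_absorb : forall a b, join a (meet a b) = a;
  meet1 : forall a, meet a one = a;
  join0 : forall a, join a zero = a;
  orthK : forall a, orth (orth a) = a;
  orth_anti : forall a b, meet a b = a -> meet (orth b) (orth a) = orth b;
  meet_orth : forall a, meet a (orth a) = zero;
  join_orth : forall a, join a (orth a) = one
}.

Arguments meet {o}. Arguments join {o}. Arguments orth {o}.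
Arguments zero {o}. Arguments one {o}.

Definition ole {L : OL} (a b : L) : Prop := meet a b = a.

Definition orthomodular (L : OL) : Prop :=
  forall a b : L, ole a b -> b = join a (meet (orth a) b).

Definition imp {L : OL} (a b : L) : L := join (orth a) (meet a b).

(* eqv a m x y  is  x ≡^(m+3) y, where the variables are a 1, a 2, ..., and
   a 3 is the fixed third variable; at level k>=4 the extra variable is a k. *)
Fixpoint eqv {L : OL} (a : nat -> L) (m : nat) (x y : L) : L :=
  match m with
  | O => join (meet (imp x (a 3)) (imp y (a 3)))
              (meet (imp (orth x) (a 3)) (imp (orth y) (a 3)))
  | S m' => join (eqv a m' x y)
                 (meet (eqv a m' x (a (m + 3))) (eqv a m' y (a (m + 3))))
  end.

Definition nequiv {L : OL} (n : nat) (a : nat -> L) : L := eqv a (n - 3) (a 1) (a 2).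

Definition nOA_law (n : nat) (L : OL) : Prop :=
  forall a : nat -> L,
    ole (meet (imp (a 1) (a 3)) (nequiv n a)) (imp (a 2) (a 3)).

(* Main.v *)
Require Import Defs.
From Stdlib Require Import Arith Lia List Bool.
Import ListNotations.
Section G.
Variable L : OL.
Implicit Types x y z u v p q r : L.
Let mC x y : meet x y = meet y x := meetC L x y.
Let jC x y : join x y = join y x := joinC L x y.
Let jA x y z : join x (join y z) = join (join x y) z := joinA L x y z.

Lemma meet_idem x : meet x x = x.
Proof. rewrite <- (join_absorb L x x) at 2. apply meet_absorb. Qed.
Lemma join_idem x : join x x = x.
Proof. rewrite <- (meet_absorb L x x) at 2. apply join_absorb. Qed.
Lemma join_one x : join x one = one.
Proof. rewrite <- (join_orth L x). rewrite joinA, join_idem. reflexivity. Qed.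
Lemma one_join x : join one x = one.
Proof. rewrite joinC. apply join_one. Qed.
Lemma one_meet x : meet one x = x.
Proof. rewrite meetC. apply meet1. Qed.
Lemma zero_join x : join zero x = x.
Proof. rewrite joinC. apply join0. Qed.
Lemma zero_meet x : meet zero x = zero.
Proof. rewrite <- (zero_join x) at 1. apply meet_absorb. Qed.
Lemma meet_zero x : meet x zero = zero.
Proof. rewrite meetC. apply zero_meet. Qed.

Lemma ole_join p r : ole p r -> join p r = r.
Proof. unfold ole. intro H. rewrite <- H, joinC, meetC. apply join_absorb. Qed.
Lemma ole_antisym p q : ole p q -> ole q p -> p = q.
Proof. unfold ole. intros H1 H2. transitivity (meet p q); [symmetry; exact H1|]. rewrite meetC; exact H2. Qed.
Lemma ole_trans p q r : ole p q -> ole q r -> ole p r.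
Proof. unfold ole. intros H1 H2. rewrite <- H1, <- meetA, H2. reflexivity. Qed.
Lemma ole_meet_l p q : ole (meet p q) p.
Proof. unfold ole. rewrite meetC, meetA, meet_idem. reflexivity. Qed.
Lemma ole_meet_r p q : ole (meet p q) q.
Proof. unfold ole. rewrite <- meetA, meet_idem. reflexivity. Qed.
Lemma ole_join_l p q : ole p (join p q).
Proof. unfold ole. apply meet_absorb. Qed.
Lemma ole_join_r p q : ole q (join p q).
Proof. rewrite joinC. apply ole_join_l. Qed.
Lemma ole_glb r p q : ole r p -> ole r q -> ole r (meet p q).
Proof. unfold ole. intros H1 H2. rewrite meetA, H1, H2. reflexivity. Qed.
Lemma ole_lub p q r : ole p r -> ole q r -> ole (join p q) r.
Proof. intros H1 H2. apply ole_join in H1. apply ole_join in H2.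
  unfold ole. assert (E : join (join p q) r = r) by (rewrite <- joinA, H2, H1; reflexivity).
  rewrite <- E. apply meet_absorb. Qed.
Lemma ole_orth p q : ole p q -> ole (orth q) (orth p).
Proof. apply orth_anti. Qed.
Lemma ole_orth' p q : ole (orth p) (orth q) -> ole q p.
Proof. intro H. apply ole_orth in H. rewrite !orthK in H. exact H. Qed.

Lemma demorgan_meet u v : orth (meet u v) = join (orth u) (orth v).
Proof.
  apply ole_antisym.
  - apply ole_orth'. rewrite orthK. apply ole_glb.
    + apply ole_orth'. rewrite orthK. apply ole_join_l.
    + apply ole_orth'. rewrite orthK. apply ole_join_r.
  - apply ole_lub; apply ole_orth; [apply ole_meet_l | apply ole_meet_r].
Qed.
Lemma demorgan_join u v : orth (join u v) = meet (orth u) (orth v).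
Proof.
  rewrite <- (orthK L u) at 1. rewrite <- (orthK L v) at 1.
  rewrite <- demorgan_meet, orthK. reflexivity.
Qed.

Lemma eqv0_refl (a : nat -> L) x : eqv a 0 x x = one.
Proof.
  simpl. rewrite !meet_idem. unfold imp. rewrite orthK.
  apply ole_antisym; [unfold ole; apply meet1|].
  rewrite <- (join_orth L x), jC. apply ole_lub.
  - eapply ole_trans; [|apply ole_join_l]. apply ole_join_l.
  - eapply ole_trans; [|apply ole_join_r]. apply ole_join_l.
Qed.

Lemma eqv0_sym (a : nat -> L) x y : eqv a 0 x y = eqv a 0 y x.
Proof. simpl. rewrite (mC (imp x _)), (mC (imp (orth x) _)). reflexivity. Qed.

Lemma eqv_S (a : nat -> L) m x y : eqv a (S m) x y =
  join (eqv a m x y) (meet (eqv a m x (a (S m + 3))) (eqv a m y (a (S m + 3)))).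
Proof. reflexivity. Qed.

Lemma eqv_collapse (a : nat -> L) :
  (forall k, 4 <= k -> a k = a 1) ->
  forall m, eqv a m (a 1) (a 1) = one /\
            eqv a m (a 1) (a 2) = eqv a 0 (a 1) (a 2) /\
            eqv a m (a 2) (a 1) = eqv a 0 (a 1) (a 2).
Proof.
  intros Ha m. induction m as [|m [H1 [H2 H3]]].
  - split; [apply eqv0_refl|split; [reflexivity|apply eqv0_sym]].
  - assert (E4 : a (S m + 3) = a 1) by (apply Ha; lia).
    rewrite !eqv_S, E4, H1, H2, H3.
    split; [apply one_join|]. split.
    + rewrite one_meet. apply join_idem.
    + rewrite meet1. apply join_idem.
Qed.

Lemma part1 n : nOA_law n L -> orthomodular L.
Proof.
  intros HL x y Hxy.
  set (a := fun k => match k with 2 => y | 3 => @zero L | _ => x end).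
  specialize (HL a). unfold nequiv in HL.
  destruct (eqv_collapse a (ltac:(intros k Hk; do 4 (destruct k as [|k]; [lia|]); reflexivity)) (n-3))
    as [_ [H _]].
  rewrite H in HL. clear H. simpl in HL. unfold imp in HL.
  rewrite !meet_zero, !join0, !orthK in HL.
  (* HL : ole (meet x' (join (meet x' y') (meet x y))) y' *)
  assert (Hyx : meet (orth x) (orth y) = orth y).
  { rewrite meetC. apply orth_anti. exact Hxy. }
  rewrite Hyx, Hxy in HL.
  assert (K : meet (orth x) (join (orth y) x) = orth y).
  { apply ole_antisym; [exact HL|].
    apply ole_glb. rewrite meetC in Hyx. exact Hyx. apply ole_join_l. }
  apply (f_equal orth) in K. rewrite orthK, demorgan_meet, demorgan_join, !orthK in K.
  rewrite mC. symmetry. exact K.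
Qed.
End G.
Inductive E : Type := E0 | E1 | E2 | E3 | E4 | E5 | E6 | E7 | E8 | E9 | E10 | E11 | E12 | E13 | E14 | E15 | E16 | E17 | E18 | E19 | E20 | E21 | E22 | E23 | E24 | E25 | E26 | E27 | E28 | E29 | E30 | E31.
Definition to_nat (x:E) : nat := match x with E0 => 0 | E1 => 1 | E2 => 2 | E3 => 3 | E4 => 4 | E5 => 5 | E6 => 6 | E7 => 7 | E8 => 8 | E9 => 9 | E10 => 10 | E11 => 11 | E12 => 12 | E13 => 13 | E14 => 14 | E15 => 15 | E16 => 16 | E17 => 17 | E18 => 18 | E19 => 19 | E20 => 20 | E21 => 21 | E22 => 22 | E23 => 23 | E24 => 24 | E25 => 25 | E26 => 26 | E27 => 27 | E28 => 28 | E29 => 29 | E30 => 30 | E31 => 31 end.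
Definition of_nat (n:nat) : E := match n with 0 => E0 | 1 => E1 | 2 => E2 | 3 => E3 | 4 => E4 | 5 => E5 | 6 => E6 | 7 => E7 | 8 => E8 | 9 => E9 | 10 => E10 | 11 => E11 | 12 => E12 | 13 => E13 | 14 => E14 | 15 => E15 | 16 => E16 | 17 => E17 | 18 => E18 | 19 => E19 | 20 => E20 | 21 => E21 | 22 => E22 | 23 => E23 | 24 => E24 | 25 => E25 | 26 => E26 | 27 => E27 | 28 => E28 | 29 => E29 | 30 => E30 | _ => E31 end.
Definition allE : list E := [E0; E1; E2; E3; E4; E5; E6; E7; E8; E9; E10; E11; E12; E13; E14; E15; E16; E17; E18; E19; E20; E21; E22; E23; E24; E25; E26; E27; E28; E29; E30; E31].
Definition mtab : list nat := [0; 0; 0; 0; 0; 0; 0; 0; 0; 0; 0; 0; 0; 0; 0; 0; 0; 0; 0; 0; 0; 0; 0; 0; 0; 0; 0; 0; 0; 0; 0; 0; 0; 1; 2; 3; 4; 5; 6; 7; 8; 9; 10; 11; 12; 13; 14; 15; 16; 17; 18; 19; 20; 21; 22; 23; 24; 25; 26; 27; 28; 29; 30; 31; 0; 2; 2; 0; 0; 0; 0; 0; 0; 0; 0; 0; 0; 0; 0; 0; 0; 0; 0; 0; 2; 0; 2; 0; 0; 0; 2; 2; 0; 0; 0; 0; 0; 3; 0; 3; 0; 0; 0; 0; 0; 0; 0; 0; 0; 0; 0; 0; 0; 0; 0; 3; 0; 3; 0; 3; 0; 3; 3; 0; 0; 0; 3; 0; 0; 4; 0; 0; 4; 0; 0;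 0; 0; 0; 0; 0; 0; 0; 0; 0; 0; 0; 4; 0; 4; 0; 0; 0; 4; 0; 0; 0; 0; 0; 4; 0; 0; 5; 0; 0; 0; 5; 0; 0; 0; 0; 0; 0; 0; 0; 0; 0; 0; 5; 0; 5; 0; 0; 0; 0; 5; 0; 0; 5; 0; 0; 0; 0; 0; 6; 0; 0; 0; 0; 6; 0; 0; 0; 0; 0; 0; 0; 0; 0; 0; 0; 6; 0; 0; 0; 0; 6; 0; 0; 0; 0; 0; 0; 0; 0; 0; 7; 0; 0; 0; 0; 0; 7; 0; 0; 0; 0; 0; 0; 0; 0; 0; 7; 0; 0; 0; 0; 0; 0; 0; 0; 7; 0; 0; 0; 0; 0; 0; 8; 0; 0; 0; 0; 0; 0; 8; 0; 0; 0; 0; 0; 0; 0; 0; 0; 8; 0; 0; 8; 0; 0; 0; 0; 0; 0; 0; 0; 0; 0; 0; 9; 0; 0; 0; 0; 0; 0; 0; 9; 0; 0; 0; 0; 0; 0; 0; 0; 0; 9; 9; 0; 0; 0; 0; 0; 0; 0; 9; 9; 0; 0; 0; 10; 0; 0; 0; 0; 0; 0; 0; 0; 10; 0; 0; 0; 0; 0; 0; 0; 10; 0; 0; 0; 0; 0; 0; 0; 10; 0; 10; 0; 0; 10; 0; 11; 0; 0; 0; 0; 0; 0; 0; 0; 0; 11; 0; 0; 0; 0; 0; 11; 11; 0; 0; 0; 11; 0; 0; 11; 0; 0; 0; 0; 0; 0; 0; 12; 0; 0; 0; 0; 0; 0; 0; 0; 0; 0; 12; 0; 0; 0; 0; 12;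 0; 0; 12; 0; 0; 0; 0; 0; 0; 0; 0; 0; 0; 0; 0; 13; 0; 0; 0; 0; 0; 0; 0; 0; 0; 0; 0; 13; 0; 0; 0; 0; 0; 0; 0; 0; 0; 0; 13; 13; 0; 0; 0; 13; 0; 13; 0; 14; 0; 0; 0; 0; 0; 0; 0; 0; 0; 0; 0; 0; 14; 0; 0; 0; 0; 0; 0; 0; 0; 0; 14; 0; 0; 0; 14; 0; 0; 0; 0; 15; 0; 0; 0; 0; 0; 0; 0; 0; 0; 0; 0; 0; 0; 15; 0; 0; 15; 15; 0; 0; 0; 0; 0; 0; 0; 0; 0; 0; 0; 0; 0; 16; 0; 0; 0; 0; 0; 0; 0; 0; 0; 0; 0; 0; 0; 0; 16; 0; 0; 0; 0; 0; 0; 0; 0; 16; 0; 0; 16; 0; 0; 0; 0; 17; 0; 0; 0; 5; 0; 7; 0; 0; 0; 11; 12; 0; 0; 0; 0; 17; 11; 5; 12; 0; 11; 0; 5; 11; 7; 5; 0; 0; 0; 0; 0; 18; 0; 0; 4; 0; 6; 0; 8; 0; 10; 11; 0; 0; 0; 15; 0; 11; 18; 15; 4; 8; 11; 6; 4; 11; 10; 0; 10; 0; 4; 10; 0; 19; 0; 3; 0; 5; 0; 0; 0; 9; 0; 0; 0; 0; 0; 15; 0; 5; 15; 19; 9; 3; 0; 3; 5; 3; 3; 5; 9; 9; 3; 0; 0; 20; 2; 0; 4; 0; 0; 0; 0; 9; 0; 0; 12; 0; 0; 0; 0; 12; 4; 9; 20; 0; 2; 0; 4; 0; 2; 2; 9;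 9; 4; 0; 0; 21; 0; 3; 0; 0; 0; 0; 8; 0; 0; 0; 0; 0; 0; 0; 0; 0; 8; 3; 0; 21; 0; 3; 0; 3; 3; 0; 0; 0; 3; 0; 0; 22; 2; 0; 0; 0; 0; 0; 0; 0; 0; 11; 0; 0; 0; 0; 0; 11; 11; 0; 2; 0; 22; 0; 0; 11; 2; 2; 0; 0; 0; 0; 0; 23; 0; 3; 0; 0; 6; 0; 0; 0; 0; 0; 0; 0; 0; 0; 0; 0; 6; 3; 0; 3; 0; 23; 0; 3; 3; 0; 0; 0; 3; 0; 0; 24; 0; 0; 4; 5; 0; 0; 0; 0; 0; 0; 0; 13; 14; 0; 0; 5; 4; 5; 4; 0; 0; 0; 24; 13; 0; 5; 14; 13; 4; 13; 0; 25; 0; 3; 0; 0; 0; 0; 0; 0; 0; 11; 0; 13; 0; 0; 16; 11; 11; 3; 0; 3; 11; 3; 13; 25; 3; 0; 16; 13; 3; 13; 0; 26; 2; 3; 0; 0; 0; 7; 0; 0; 10; 0; 0; 0; 0; 0; 0; 7; 10; 3; 2; 3; 2; 3; 0; 3; 26; 2; 10; 0; 3; 10; 0; 27; 2; 0; 0; 5; 0; 0; 0; 0; 0; 0; 0; 0; 0; 0; 0; 5; 0; 5; 2; 0; 2; 0; 5; 0; 2; 27; 0; 0; 0; 0; 0; 28; 0; 0; 0; 0; 0; 0; 0; 9; 10; 0; 0; 0; 14; 0; 16; 0; 10; 9; 9; 0; 0; 0; 14; 16; 10; 0; 28; 9; 0; 10; 0; 29; 0; 0; 0; 0; 0; 0;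 0; 9; 0; 0; 0; 13; 0; 0; 0; 0; 0; 9; 9; 0; 0; 0; 13; 13; 0; 0; 9; 29; 0; 13; 0; 30; 0; 3; 4; 0; 0; 0; 0; 0; 0; 0; 0; 0; 0; 0; 0; 0; 4; 3; 4; 3; 0; 3; 4; 3; 3; 0; 0; 0; 30; 0; 0; 31; 0; 0; 0; 0; 0; 0; 0; 0; 10; 0; 0; 13; 0; 0; 0; 0; 10; 0; 0; 0; 0; 0; 13; 13; 10; 0; 10; 13; 0; 31].
Definition jtab : list nat := [0; 1; 2; 3; 4; 5; 6; 7; 8; 9; 10; 11; 12; 13; 14; 15; 16; 17; 18; 19; 20; 21; 22; 23; 24; 25; 26; 27; 28; 29; 30; 31; 1; 1; 1; 1; 1; 1; 1; 1; 1; 1; 1; 1; 1; 1; 1; 1; 1; 1; 1; 1; 1; 1; 1; 1; 1; 1; 1; 1; 1; 1; 1; 1; 2; 1; 2; 26; 20; 27; 1; 26; 1; 20; 26; 22; 20; 1; 1; 1; 1; 1; 1; 1; 20; 1; 22; 1; 1; 1; 26; 27; 1; 1; 1; 1; 3; 1; 26; 3; 30; 19; 23; 26; 21; 19; 26; 25; 1; 25; 1; 19; 25; 1; 1; 19; 1; 21; 1; 23; 1; 25; 26; 1; 1; 1; 30; 1; 4; 1; 20; 30; 4; 24; 18; 1; 18; 20; 18; 18; 20; 24; 24; 18; 1; 1; 18; 1; 20; 1; 1; 1; 24; 1; 1; 1; 1; 1; 30; 1; 5; 1; 27; 19; 24; 5; 1; 17; 1; 19; 1; 17; 17; 24; 24;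 19; 1; 17; 1; 19; 1; 1; 1; 1; 24; 1; 1; 27; 1; 1; 1; 1; 6; 1; 1; 23; 18; 1; 6; 1; 18; 1; 18; 18; 1; 1; 1; 18; 1; 1; 18; 1; 1; 1; 1; 23; 1; 1; 1; 1; 1; 1; 1; 1; 7; 1; 26; 26; 1; 17; 1; 7; 1; 1; 26; 17; 17; 1; 1; 1; 1; 17; 1; 1; 1; 1; 1; 1; 1; 1; 26; 1; 1; 1; 1; 1; 8; 1; 1; 21; 18; 1; 18; 1; 8; 1; 18; 18; 1; 1; 1; 18; 1; 1; 18; 1; 1; 21; 1; 1; 1; 1; 1; 1; 1; 1; 1; 1; 9; 1; 20; 19; 20; 19; 1; 1; 1; 9; 28; 1; 20; 29; 28; 19; 28; 1; 1; 19; 20; 1; 1; 1; 1; 1; 1; 1; 28; 29; 1; 1; 10; 1; 26; 26; 18; 1; 18; 26; 18; 28; 10; 18; 1; 31; 28; 18; 28; 1; 18; 1; 1; 1; 1; 1; 1; 1; 26; 1; 28; 1; 1; 31; 11; 1; 22; 25; 18; 17; 18; 17; 18; 1; 18; 11; 17; 25; 1; 18; 25; 17; 18; 1; 1; 1; 22; 1; 1; 25; 1; 1; 1; 1; 1; 1; 12; 1; 20; 1; 20; 17; 1; 17; 1; 20; 1; 17; 12; 1; 1; 1; 1; 17; 1; 1; 20; 1; 1; 1; 1; 1; 1; 1; 1; 1; 1; 1; 13; 1; 1; 25; 24; 24; 1; 1; 1; 29; 31; 25; 1; 13; 24; 1; 25; 1; 1; 1; 1; 1; 1; 1; 24; 25;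 1; 1; 1; 29; 1; 31; 14; 1; 1; 1; 24; 24; 1; 1; 1; 28; 28; 1; 1; 24; 14; 1; 28; 1; 1; 1; 1; 1; 1; 1; 24; 1; 1; 1; 28; 1; 1; 1; 15; 1; 1; 19; 18; 19; 18; 1; 18; 19; 18; 18; 1; 1; 1; 15; 1; 1; 18; 19; 1; 1; 1; 1; 1; 1; 1; 1; 1; 1; 1; 1; 16; 1; 1; 25; 1; 1; 1; 1; 1; 28; 28; 25; 1; 25; 28; 1; 16; 1; 1; 1; 1; 1; 1; 1; 1; 25; 1; 1; 28; 1; 1; 1; 17; 1; 1; 1; 1; 17; 1; 17; 1; 1; 1; 17; 17; 1; 1; 1; 1; 17; 1; 1; 1; 1; 1; 1; 1; 1; 1; 1; 1; 1; 1; 1; 18; 1; 1; 1; 18; 1; 18; 1; 18; 1; 18; 18; 1; 1; 1; 18; 1; 1; 18; 1; 1; 1; 1; 1; 1; 1; 1; 1; 1; 1; 1; 1; 19; 1; 1; 19; 1; 19; 1; 1; 1; 19; 1; 1; 1; 1; 1; 19; 1; 1; 1; 19; 1; 1; 1; 1; 1; 1; 1; 1; 1; 1; 1; 1; 20; 1; 20; 1; 20; 1; 1; 1; 1; 20; 1; 1; 20; 1; 1; 1; 1; 1; 1; 1; 20; 1; 1; 1; 1; 1; 1; 1; 1; 1; 1; 1; 21; 1; 1; 21; 1; 1; 1; 1; 21; 1; 1; 1; 1; 1; 1; 1; 1; 1; 1; 1; 1; 21; 1; 1; 1; 1; 1; 1; 1; 1; 1; 1; 22; 1; 22; 1; 1;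 1; 1; 1; 1; 1; 1; 22; 1; 1; 1; 1; 1; 1; 1; 1; 1; 1; 22; 1; 1; 1; 1; 1; 1; 1; 1; 1; 23; 1; 1; 23; 1; 1; 23; 1; 1; 1; 1; 1; 1; 1; 1; 1; 1; 1; 1; 1; 1; 1; 1; 23; 1; 1; 1; 1; 1; 1; 1; 1; 24; 1; 1; 1; 24; 24; 1; 1; 1; 1; 1; 1; 1; 24; 24; 1; 1; 1; 1; 1; 1; 1; 1; 1; 24; 1; 1; 1; 1; 1; 1; 1; 25; 1; 1; 25; 1; 1; 1; 1; 1; 1; 1; 25; 1; 25; 1; 1; 25; 1; 1; 1; 1; 1; 1; 1; 1; 25; 1; 1; 1; 1; 1; 1; 26; 1; 26; 26; 1; 1; 1; 26; 1; 1; 26; 1; 1; 1; 1; 1; 1; 1; 1; 1; 1; 1; 1; 1; 1; 1; 26; 1; 1; 1; 1; 1; 27; 1; 27; 1; 1; 27; 1; 1; 1; 1; 1; 1; 1; 1; 1; 1; 1; 1; 1; 1; 1; 1; 1; 1; 1; 1; 1; 27; 1; 1; 1; 1; 28; 1; 1; 1; 1; 1; 1; 1; 1; 28; 28; 1; 1; 1; 28; 1; 28; 1; 1; 1; 1; 1; 1; 1; 1; 1; 1; 1; 28; 1; 1; 1; 29; 1; 1; 1; 1; 1; 1; 1; 1; 29; 1; 1; 1; 29; 1; 1; 1; 1; 1; 1; 1; 1; 1; 1; 1; 1; 1; 1; 1; 29; 1; 1; 30; 1; 1; 30; 30; 1; 1; 1; 1; 1; 1; 1; 1; 1; 1; 1;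 1; 1; 1; 1; 1; 1; 1; 1; 1; 1; 1; 1; 1; 1; 30; 1; 31; 1; 1; 1; 1; 1; 1; 1; 1; 1; 31; 1; 1; 31; 1; 1; 1; 1; 1; 1; 1; 1; 1; 1; 1; 1; 1; 1; 1; 1; 1; 31].
Definition oE (x:E) : E := match x with E0 => E1 | E1 => E0 | E2 => E17 | E3 => E18 | E4 => E19 | E5 => E20 | E6 => E21 | E7 => E22 | E8 => E23 | E9 => E24 | E10 => E25 | E11 => E26 | E12 => E27 | E13 => E28 | E14 => E29 | E15 => E30 | E16 => E31 | E17 => E2 | E18 => E3 | E19 => E4 | E20 => E5 | E21 => E6 | E22 => E7 | E23 => E8 | E24 => E9 | E25 => E10 | E26 => E11 | E27 => E12 | E28 => E13 | E29 => E14 | E30 => E15 | E31 => E16 end.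
Definition NE := 32.

Lemma of_to x : of_nat (to_nat x) = x.
Proof. destruct x; reflexivity. Qed.
Definition eqE (x y : E) : bool := Nat.eqb (to_nat x) (to_nat y).
Lemma eqE_ok x y : eqE x y = true -> x = y.
Proof. unfold eqE. intro H. apply Nat.eqb_eq in H.
  rewrite <- (of_to x), <- (of_to y), H. reflexivity. Qed.
Lemma eqE_refl x : eqE x x = true.
Proof. apply Nat.eqb_refl. Qed.
Lemma allE_in x : In x allE.
Proof. destruct x; simpl; tauto. Qed.

Definition mE (x y : E) : E := of_nat (nth (to_nat x * NE + to_nat y) mtab 0).
Definition jE (x y : E) : E := of_nat (nth (to_nat x * NE + to_nat y) jtab 0).

Lemma all1 (P : E -> bool) : forallb P allE = true -> forall x, P x = true.
Proof. intros H x. rewrite forallb_forall in H. apply H, allE_in. Qed.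
Lemma all2 (P : E -> E -> bool) :
  forallb (fun x => forallb (P x) allE) allE = true -> forall x y, P x y = true.
Proof. intros H x. apply all1. exact (all1 _ H x). Qed.
Lemma all3 (P : E -> E -> E -> bool) :
  forallb (fun x => forallb (fun y => forallb (P x y) allE) allE) allE = true ->
  forall x y z, P x y z = true.
Proof. intros H x. apply all2. exact (all1 _ H x). Qed.

Lemma cmeetC a b : mE a b = mE b a.
Proof. apply eqE_ok. revert a b. apply all2. vm_compute. reflexivity. Qed.
Lemma cjoinC a b : jE a b = jE b a.
Proof. apply eqE_ok. revert a b. apply all2. vm_compute. reflexivity. Qed.
Lemma cmeetA a b c : mE a (mE b c) = mE (mE a b) c.
Proof. apply eqE_ok. revert a b c. apply all3. vm_compute. reflexivity. Qed.
Lemma cjoinA a b c : jE a (jE b c) = jE (jE a b) c.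
Proof. apply eqE_ok. revert a b c. apply all3. vm_compute. reflexivity. Qed.
Lemma cmabs a b : mE a (jE a b) = a.
Proof. apply eqE_ok. revert a b. apply all2. vm_compute. reflexivity. Qed.
Lemma cjabs a b : jE a (mE a b) = a.
Proof. apply eqE_ok. revert a b. apply all2. vm_compute. reflexivity. Qed.
Lemma cmeet1 a : mE a E1 = a.
Proof. apply eqE_ok. revert a. apply all1. vm_compute. reflexivity. Qed.
Lemma cjoin0 a : jE a E0 = a.
Proof. apply eqE_ok. revert a. apply all1. vm_compute. reflexivity. Qed.
Lemma corthK a : oE (oE a) = a.
Proof. destruct a; reflexivity. Qed.
Lemma canti a b : mE a b = a -> mE (oE b) (oE a) = oE b.
Proof.
  assert (H : forall a b, negb (eqE (mE a b) a) || eqE (mE (oE b) (oE a)) (oE b) = true)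
    by (apply all2; vm_compute; reflexivity).
  intro Hab. specialize (H a b). rewrite Hab, eqE_refl in H. apply eqE_ok. exact H.
Qed.
Lemma cmorth a : mE a (oE a) = E0.
Proof. apply eqE_ok. revert a. apply all1. vm_compute. reflexivity. Qed.
Lemma cjorth a : jE a (oE a) = E1.
Proof. apply eqE_ok. revert a. apply all1. vm_compute. reflexivity. Qed.

Definition CL : OL := {|
  car := E; meet := mE; join := jE; zero := E0; one := E1; orth := oE;
  meetC := cmeetC; joinC := cjoinC; meetA := cmeetA; joinA := cjoinA;
  meet_absorb := cmabs; join_absorb := cjabs; meet1 := cmeet1; join0 := cjoin0;
  orthK := corthK; orth_anti := canti; meet_orth := cmorth; join_orth := cjorth |}.

Lemma CL_oml : orthomodular CL.
Proof.
  assert (H : forall a b, negb (eqE (mE a b) a) || eqE b (jE a (mE (oE a) b)) = true)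
    by (apply all2; vm_compute; reflexivity).
  intros a b Hab. specialize (H a b). unfold ole in Hab. simpl in Hab.
  rewrite Hab, eqE_refl in H. apply eqE_ok. exact H.
Qed.

Lemma CL_not_nOA n : ~ nOA_law n CL.
Proof.
  intro HL.
  set (a := fun k => match k with 2 => E4 | 3 => E17 | _ => E3 end : CL).
  specialize (HL a). unfold nequiv in HL.
  destruct (eqv_collapse CL a (ltac:(intros k Hk; do 4 (destruct k as [|k]; [lia|]); reflexivity)) (n-3))
    as [_ [H _]].
  rewrite H in HL. vm_compute in HL. discriminate HL.
Qed.

Theorem theorem4p4 :
  (forall (n : nat), 3 <= n -> forall L : OL, nOA_law n L -> orthomodular L) /\
  (forall (n : nat), 3 <= n -> exists L : OL, orthomodular L /\ ~ nOA_law n L).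
Proof.
  split.
  - intros n _ L HL. exact (part1 L n HL).
  - intros n _. exists CL. split; [apply CL_oml | apply CL_not_nOA].
Qed.
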